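(* Let $\Sigma=(V,E)$ be a finite directed network in which every edge has capacity $1$, which is inner-superbalanced, and whose boundary is partitioned as $\partial\Sigma=A\sqcup B\sqcup C\sqcup D$. Then $$-I_3(A:B:C):=S(AB)+S(AC)+S(BC)-S(A)-S(B)-S(C)-S(ABC)\ \ge\ 0.$$
   Context: A flow on a directed network with capacities $c$ is a function $v:E\to\mathbb R_{\ge0}$ with $v^e\le c^e$ and, at every non-boundary vertex $x$, total inflow equal to total outflow. The flux of $v$ out of a boundary set $X\subset\partial\Sigma$ is $\sum_{e:s(e)\in X}v^e-\sum_{e:t(e)\in X}v^e$, where $s(e),t(e)$ are the source and target of $e$; $S(X)$ is the maximum flux out of $X$ over all flows, and juxtaposition such as $AB$ denotes the union $A\cup B$. A network is inner-superbalanced if at each non-boundary vertex the total capacity of incoming edges is at most that of outgoing edges. *)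

(* Defs.v *)
From HB Require Import structures.
From mathcomp Require Import all_boot all_order all_algebra.
From mathcomp Require Import classical_sets reals.
Set Implicit Arguments. Unset Strict Implicit. Unset Printing Implicit Defensive.
Import Order.TTheory GRing.Theory Num.Theory.
Local Open Scope ring_scope.

Section Network.
Variables (R : realType) (V E : finType) (src tgt : E -> V).
Variables (bnd : {set V}) (c : E -> R).

Definition is_flow (v : E -> R) : Prop :=
  (forall e, 0 <= v e /\ v e <= c e) /\
  (forall x, x \notin bnd ->
     \sum_(e | tgt e == x) v e = \sum_(e | src e == x) v e).

Definition flux (v : E -> R) (X : {set V}) : R :=
  \sum_(e | src e \in X) v e - \sum_(e | tgt e \in X) v e.

(* S(X): maximal flux out of X over all flows (the maximum exists: the set of
   flows is a nonempty compact polytope), expressed as the supremum. *)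
Definition maxflux (X : {set V}) : R :=
  sup [set r | exists v, is_flow v /\ r = flux v X]%classic.

Definition inner_superbalanced : Prop :=
  forall x, x \notin bnd ->
    \sum_(e | tgt e == x) c e <= \sum_(e | src e == x) c e.
End Network.

(* Main.v *)
Require Import Defs.
From HB Require Import structures.
From mathcomp Require Import all_boot all_order all_algebra.
From mathcomp Require Import classical_sets reals.
From mathcomp Require Import lra zify.
Set Implicit Arguments. Unset Strict Implicit. Unset Printing Implicit Defensive.
Import Order.TTheory GRing.Theory Num.Theory.
Local Open Scope ring_scope.

Definition cutb (a b : bool) : nat := a && ~~ b.
Definition fA (p1 p2 p3 : bool) := [&& p1, p2 & ~~ p3].
Definition fB (p1 p2 p3 : bool) := [&& p1, p3 & ~~ p2].
Definition fC (p1 p2 p3 : bool) := [&& p2, p3 & ~~ p1].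
Definition fU (p1 p2 p3 : bool) := [|| p1, p2 | p3].
Definition hh (p1 p2 p3 : bool) : nat :=
  (p1 + p2 + p3 - (fA p1 p2 p3 + fB p1 p2 p3 + fC p1 p2 p3 + fU p1 p2 p3))%N.
Lemma edge_ineq p1 p2 p3 q1 q2 q3 :
  (2 * (cutb (fA p1 p2 p3) (fA q1 q2 q3) + cutb (fB p1 p2 p3) (fB q1 q2 q3)
       + cutb (fC p1 p2 p3) (fC q1 q2 q3) + cutb (fU p1 p2 p3) (fU q1 q2 q3))
   + hh p1 p2 p3 <=
  2 * (cutb p1 q1 + cutb p2 q2 + cutb p3 q3) + hh q1 q2 q3)%N.
Proof. by case: p1; case: p2; case: p3; case: q1; case: q2; case: q3. Qed.

Section Net.
Variables (R : realType) (V E : finType) (src tgt : E -> V).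
Variables (bnd : {set V}) (c : E -> R).
Hypothesis c1 : forall e, c e = 1.

Definition ind (b : bool) : R := if b then 1 else 0.
Definition net (v : E -> R) (w : V) :=
  \sum_(e | src e == w) v e - \sum_(e | tgt e == w) v e.
Definition capN (W : {set V}) : nat :=
  (\sum_e ((src e \in W) && (tgt e \notin W) : nat))%N.

Lemma sum_part (v : E -> R) (W : {set V}) (f : E -> V) :
  \sum_(e | f e \in W) v e = \sum_(w in W) \sum_(e | f e == w) v e.
Proof.
rewrite (partition_big f (mem W)) //=; apply: eq_bigr => w wW.
by apply: eq_bigl => e; rewrite andbC; case: eqP => //= ->.
Qed.

Lemma fluxE (v : E -> R) (W : {set V}) : flux src tgt v W = \sum_(w in W) net v w.
Proof. by rewrite /flux !sum_part -sumrB. Qed.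

Lemma flux_shift (v : E -> R) (X W : {set V}) : is_flow src tgt bnd c v -> X \subset W ->
  (forall w, w \in W -> w \in bnd -> w \in X) -> flux src tgt v W = flux src tgt v X.
Proof.
move=> [_ cons] XW WX; rewrite !fluxE (big_setID X) /=.
rewrite (finset.setIidPr XW) [X in _ + X]big1 ?addr0 // => w.
rewrite inE => /andP[wnX wW]; rewrite /net.
have wb : w \notin bnd by apply/negP => /(WX _ wW); rewrite (negbTE wnX).
by rewrite (cons _ wb) subrr.
Qed.

Lemma flux_cut (v : E -> R) (W : {set V}) : flux src tgt v W =
  \sum_(e | (src e \in W) && (tgt e \notin W)) v e -
  \sum_(e | (tgt e \in W) && (src e \notin W)) v e.
Proof.
rewrite /flux (bigID (fun e => tgt e \in W)) /=.
rewrite [X in _ - X](bigID (fun e => src e \in W)) /=.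
have -> : \sum_(e | (tgt e \in W) && (src e \in W)) v e =
          \sum_(e | (src e \in W) && (tgt e \in W)) v e.
  by apply: eq_bigl => e; rewrite andbC.
lra.
Qed.

Lemma capR (W : {set V}) : \sum_(e | (src e \in W) && (tgt e \notin W)) c e = (capN W)%:R.
Proof.
rewrite /capN natr_sum big_mkcond; apply: eq_bigr => e _; rewrite c1.
by case: ((src e \in W) && (tgt e \notin W)).
Qed.

Lemma weak (v : E -> R) (X W : {set V}) : is_flow src tgt bnd c v -> X \subset W ->
  (forall w, w \in W -> w \in bnd -> w \in X) -> flux src tgt v X <= (capN W)%:R.
Proof.
move=> fl XW WX; rewrite -(flux_shift fl XW WX) flux_cut -capR.
have h1 : \sum_(e | (src e \in W) && (tgt e \notin W)) v e <=
          \sum_(e | (src e \in W) && (tgt e \notin W)) c e.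
  by apply: ler_sum => e _; case: (fl.1 e).
have h2 : 0 <= \sum_(e | (tgt e \in W) && (src e \notin W)) v e.
  by apply: sumr_ge0 => e _; case: (fl.1 e).
lra.
Qed.

Lemma flow0 : is_flow src tgt bnd c (fun _ => 0).
Proof. split=> [e|x _]; first by rewrite c1 lexx ler01. by rewrite !big1. Qed.

Lemma flux0 (X : {set V}) : flux src tgt (fun _ => 0 : R) X = 0.
Proof. by rewrite /flux !big1 // subrr. Qed.

Lemma S_le (X W : {set V}) : X \subset W ->
  (forall w, w \in W -> w \in bnd -> w \in X) -> maxflux src tgt bnd c X <= (capN W)%:R.
Proof.
move=> XW WX; apply: ge_sup.
  by exists 0; exists (fun _ => 0); split; [exact: flow0 | rewrite flux0].
by move=> r [v [fl ->]]; apply: weak.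
Qed.

Lemma S_ge (X : {set V}) (v : E -> R) : is_flow src tgt bnd c v -> flux src tgt v X <= maxflux src tgt bnd c X.
Proof.
move=> fl; apply: ub_le_sup; last by exists v.
exists (capN X)%:R => r [u [fu ->]]; apply: weak => //.
Qed.


Definition zo (v : E -> R) := forall e, v e = 0 \/ v e = 1.

Definition res (v : E -> R) : rel V := fun x y =>
  [exists e, ((src e == x) && (tgt e == y) && (v e == 0)) ||
             ((tgt e == x) && (src e == y) && (v e == 1))].

Lemma net_add (d1 d2 : E -> R) w : net (fun e => d1 e + d2 e) w = net d1 w + net d2 w.
Proof. rewrite /net !big_split /=; lra. Qed.

Lemma sum_pt (P : pred E) e0 (a : R) :
  \sum_(e | P e) (if e == e0 then a else 0) = if P e0 then a else 0.
Proof.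
rewrite -big_mkcondr /=; case Pe0: (P e0).
  rewrite (eq_bigl (pred1 e0)) ?big_pred1_eq // => e /=.
  by case: eqP => [->|]; rewrite ?Pe0 ?andbF.
by rewrite big_pred0 // => e; case: eqP => [->|]; rewrite ?Pe0 ?andbF.
Qed.

Lemma net_pt e0 (a : R) w : net (fun e => if e == e0 then a else 0) w =
  (if src e0 == w then a else 0) - (if tgt e0 == w then a else 0).
Proof. by rewrite /net !sum_pt. Qed.

Lemma aug_path (v : E -> R) (p : seq V) : forall x, path (res v) x p -> uniq (x :: p) ->
  exists d : E -> R,
  [/\ forall e, d e = 0 \/ (d e = 1 /\ v e = 0) \/ (d e = -1 /\ v e = 1),
      forall e, d e != 0 -> (src e \in x :: p) && (tgt e \in x :: p) &
      forall w, net d w = ind (x == w) - ind (last x p == w)].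
Proof.
elim: p => [|y p IH] x /=.
  move=> _ _; exists (fun _ => 0); split => [e|e|w]; first by left.
    by rewrite eqxx.
  by rewrite /net !big1 // !subrr.
move=> /andP[rxy pyp] /andP[xnin uq].
have [d' [H1 H2 H3]] := IH y pyp uq.
case/existsP: rxy => e0 He0.
have d'0 : d' e0 = 0.
  apply/eqP; apply: contraT => /H2 /andP[s0 t0].
  move: He0 xnin => /orP[/andP[/andP[/eqP sx _] _]|/andP[/andP[/eqP tx _] _]].
    by rewrite -sx s0.
  by rewrite -tx t0.
have gen : forall (a : R), (a = 1 /\ v e0 = 0) \/ (a = -1 /\ v e0 = 1) ->
   (forall w, a * (ind (src e0 == w) - ind (tgt e0 == w)) = ind (x == w) - ind (y == w)) ->
   (src e0 \in [:: x, y & p]) && (tgt e0 \in [:: x, y & p]) ->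
   exists d : E -> R,
  [/\ forall e, d e = 0 \/ (d e = 1 /\ v e = 0) \/ (d e = -1 /\ v e = 1),
      forall e, d e != 0 -> (src e \in x :: y :: p) && (tgt e \in x :: y :: p) &
      forall w, net d w = ind (x == w) - ind (last y p == w)].
  move=> a Ha Hnet Hend.
  exists (fun e => d' e + if e == e0 then a else 0); split.
  - move=> e; case: (e =P e0) => [->|_]; last by rewrite addr0.
    by rewrite d'0 add0r; right; case: Ha => [[-> ->]|[-> ->]]; [left|right].
  - move=> e; case: (e =P e0) => [->|_]; first by rewrite Hend. rewrite addr0 => /H2 /andP[s1 t1].
    by rewrite !(in_cons x) s1 t1 !orbT.
  - move=> w; rewrite net_add H3 net_pt; have := Hnet w; rewrite /ind.
    case: (src e0 == w); case: (tgt e0 == w); lra.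
case/orP: He0 => /andP[/andP[/eqP sx /eqP ty] /eqP ve].
  apply: (gen 1); first by left.
    by move=> w; rewrite sx ty mul1r.
  by rewrite sx ty !inE !eqxx !orbT.
apply: (gen (-1)); first by right.
  by move=> w; rewrite sx ty; lra.
by rewrite sx ty !inE !eqxx !orbT.
Qed.


Lemma augment (v : E -> R) (X : {set V}) x y : X \subset bnd ->
  is_flow src tgt bnd c v -> zo v -> x \in X -> y \in bnd -> y \notin X ->
  connect (res v) x y ->
  exists v', [/\ is_flow src tgt bnd c v', zo v' &
                 flux src tgt v' X = flux src tgt v X + 1].
Proof.
move=> Xb [fb fc] zv xX yb ynX /connectP [p pth yeq].
move: yb ynX; rewrite yeq.
case: (shortenP pth) => p' pth' uq _ yb ynX.
have [d [D1 D2 D3]] := aug_path pth' uq.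
have xb : x \in bnd by exact: (fintype.subsetP Xb x xX).
exists (fun e => v e + d e); split.
- split => [e|w wb] /=.
    rewrite c1; case: (zv e) => h1; case: (D1 e) => [h2|[[h2 h3]|[h2 h3]]]; lra.
  have := D3 w; rewrite /net /ind.
  have -> : (x == w) = false by apply/negP => /eqP xw; rewrite -xw xb in wb.
  have -> : (last x p' == w) = false by apply/negP => /eqP xw; rewrite -xw yb in wb.
  rewrite !big_split /= (fc w wb); lra.
- move=> e /=; case: (zv e) => h1; case: (D1 e) => [h2|[[h2 h3]|[h2 h3]]]; lra.
- have -> : flux src tgt (fun e => v e + d e) X = flux src tgt v X + flux src tgt d X.
    rewrite /flux !big_split /=; lra.
  congr (_ + _); rewrite fluxE.
  under eq_bigr do rewrite D3.
  rewrite sumrB (bigD1 x) //=.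
  rewrite big1 => [|w /andP[_ wx]]; last by rewrite /ind eq_sym (negbTE wx).
  rewrite big1 => [|w wX]; last by rewrite /ind; case: eqP => // yw; rewrite yw wX in ynX.
  by rewrite /ind eqxx; lra.
Qed.

Lemma capN_le (W : {set V}) : (capN W <= #|E|)%N.
Proof.
rewrite /capN -sum1_card; apply: leq_sum => e _.
by case: ((src e \in W) && (tgt e \notin W)).
Qed.

Definition good (X : {set V}) :=
  exists W : {set V}, [/\ X \subset W, (forall w, w \in W -> w \in bnd -> w \in X) &
    exists v, is_flow src tgt bnd c v /\ flux src tgt v X = (capN W)%:R].

Lemma dich (v : E -> R) (X : {set V}) : X \subset bnd ->
  is_flow src tgt bnd c v -> zo v ->
  good X \/ exists v', [/\ is_flow src tgt bnd c v', zo v' &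
                 flux src tgt v' X = flux src tgt v X + 1].
Proof.
move=> Xb fl zv.
pose W := [set w | [exists x, (x \in X) && connect (res v) x w]].
case: (boolP [exists w, [&& w \in W, w \in bnd & w \notin X]]).
  case/existsP => w /and3P[]; rewrite inE => /existsP[x /andP[xX cxw]] wb wnX.
  by right; apply: (augment Xb fl zv xX wb wnX cxw).
rewrite negb_exists => /forallP Hn; left; exists W.
have XW : X \subset W.
  by apply/fintype.subsetP => x xX; rewrite inE; apply/existsP; exists x; rewrite xX connect0.
have WX : forall w, w \in W -> w \in bnd -> w \in X.
  move=> w wW wb; have := Hn w; rewrite wW wb /=; by move/negbNE.
split => //; exists v; split => //.
have reach : forall a b, a \in W -> res v a b -> b \in W.
  move=> a b; rewrite !inE => /existsP[x /andP[xX cxa]] rab.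
  apply/existsP; exists x; rewrite xX /=; apply: connect_trans cxa (connect1 rab).
rewrite -(flux_shift fl XW WX) flux_cut -capR.
rewrite [X in _ - X]big1 => [|e /andP[tW snW]]; last first.
  case: (zv e) => // ve1; have : src e \in W; last by rewrite (negbTE snW).
  apply: (reach (tgt e)) => //; apply/existsP; exists e; rewrite ve1 !eqxx /=.
  by rewrite orbT.
rewrite subr0; apply: eq_bigr => e /andP[sW tnW]; rewrite c1.
case: (zv e) => // ve0; have : tgt e \in W; last by rewrite (negbTE tnW).
by apply: (reach (src e)) => //; apply/existsP; exists e; rewrite ve0 !eqxx.
Qed.

Lemma strong (X : {set V}) : X \subset bnd -> good X.
Proof.
move=> Xb.
suff H : forall n (v : E -> R), is_flow src tgt bnd c v -> zo v ->
    (#|E|%:R - flux src tgt v X <= n%:R) -> good X.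
  apply: (H #|E| (fun _ => 0)); [exact: flow0 | by left | by rewrite flux0 subr0].
elim => [|n IH] v fl zv hn; case: (dich Xb fl zv) => // [[v' [fl' zv' fx]]].
  have := weak fl' (subxx X) (fun w h _ => h).
  have := capN_le X; rewrite -(ler_nat R) => hE hw; lra.
apply: (IH v') => //; rewrite fx; move: hn; rewrite -natr1; lra.
Qed.


Lemma hsum (F : V -> nat) (f : E -> V) :
  (\sum_e F (f e) = \sum_w \sum_(e | f e == w) F w)%N.
Proof.
rewrite (partition_big f predT) //=; apply: eq_bigr => w _.
by apply: eq_bigr => e /eqP ->.
Qed.

Lemma sum2 (F : E -> nat) : (\sum_e 2 * F e = 2 * \sum_e F e)%N.
Proof.
by apply: (big_rec2 (fun a b => a = 2 * b)%N) => // i a b _ ->; rewrite mulnDr.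
Qed.

Lemma comb (W1 W2 W3 : {set V}) :
 (forall w, w \in bnd -> hh (w \in W1) (w \in W2) (w \in W3) = 0%N) ->
 (forall w, w \notin bnd -> #|[set e | tgt e == w]| <= #|[set e | src e == w]|)%N ->
 (capN (W1 :&: W2 :\: W3) + capN (W1 :&: W3 :\: W2) + capN (W2 :&: W3 :\: W1)
   + capN (W1 :|: W2 :|: W3) <= capN W1 + capN W2 + capN W3)%N.
Proof.
move=> hb sb.
set P := fun w => hh (w \in W1) (w \in W2) (w \in W3).
have mA w : (w \in W1 :&: W2 :\: W3) = fA (w \in W1) (w \in W2) (w \in W3).
  by rewrite !inE /fA; case: (w \in W1); case: (w \in W2); case: (w \in W3).
have mB w : (w \in W1 :&: W3 :\: W2) = fB (w \in W1) (w \in W2) (w \in W3).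
  by rewrite !inE /fB; case: (w \in W1); case: (w \in W2); case: (w \in W3).
have mC w : (w \in W2 :&: W3 :\: W1) = fC (w \in W1) (w \in W2) (w \in W3).
  by rewrite !inE /fC; case: (w \in W1); case: (w \in W2); case: (w \in W3).
have mU w : (w \in W1 :|: W2 :|: W3) = fU (w \in W1) (w \in W2) (w \in W3).
  by rewrite !inE /fU; case: (w \in W1); case: (w \in W2); case: (w \in W3).
have key : (\sum_e (2 * (cutb (src e \in W1 :&: W2 :\: W3) (tgt e \in W1 :&: W2 :\: W3)
     + cutb (src e \in W1 :&: W3 :\: W2) (tgt e \in W1 :&: W3 :\: W2)
     + cutb (src e \in W2 :&: W3 :\: W1) (tgt e \in W2 :&: W3 :\: W1)
     + cutb (src e \in W1 :|: W2 :|: W3) (tgt e \in W1 :|: W2 :|: W3)) + P (src e))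
   <= \sum_e (2 * (cutb (src e \in W1) (tgt e \in W1) + cutb (src e \in W2) (tgt e \in W2)
     + cutb (src e \in W3) (tgt e \in W3)) + P (tgt e)))%N.
  by apply: leq_sum => e _; rewrite !mA !mB !mC !mU /P; apply: edge_ineq.
have HP : (\sum_e P (tgt e) <= \sum_e P (src e))%N.
  rewrite !hsum; apply: leq_sum => w _; rewrite !sum_nat_cond_const.
  case: (boolP (w \in bnd)) => wb; first by rewrite /P hb // !muln0.
  by apply: leq_mul => //; apply: sb.
move: key; rewrite !big_split /= big1_eq !addn0 /capN /cutb; lia.
Qed.

End Net.

Theorem theorem5 (R : realType) (V E : finType) (src tgt : E -> V)
    (bnd : {set V}) (c : E -> R) (A B C D : {set V}) :
  (forall e, c e = 1) ->
  inner_superbalanced src tgt bnd c ->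
  A :|: B :|: C :|: D = bnd ->
  [disjoint A & B] -> [disjoint A & C] -> [disjoint A & D] ->
  [disjoint B & C] -> [disjoint B & D] -> [disjoint C & D] ->
  let S := maxflux src tgt bnd c in
  0 <= S (A :|: B) + S (A :|: C) + S (B :|: C)
       - S A - S B - S C - S (A :|: B :|: C).
Proof.
move=> c1 sb hb dAB dAC dAD dBC dBD dCD; cbv zeta.
have Hin w : (w \in bnd) = [|| w \in A, w \in B, w \in C | w \in D].
  by rewrite -hb !inE !orbA.
have nd (X Y : {set V}) w : [disjoint X & Y] -> ~~ ((w \in X) && (w \in Y)).
  by move=> dXY; apply/andP => [[h1 h2]]; rewrite (disjointFr dXY h1) in h2.
have cls w : w \in bnd ->
  [\/ [&& (w \in A) == true, (w \in B) == false, (w \in C) == false & (w \in D) == false],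
   [&& (w \in A) == false, (w \in B) == true, (w \in C) == false & (w \in D) == false],
   [&& (w \in A) == false, (w \in B) == false, (w \in C) == true & (w \in D) == false] |
   [&& (w \in A) == false, (w \in B) == false, (w \in C) == false & (w \in D) == true]].
  rewrite Hin; move: (nd _ _ w dAB) (nd _ _ w dAC) (nd _ _ w dAD) (nd _ _ w dBC)
    (nd _ _ w dBD) (nd _ _ w dCD).
  case: (w \in A); case: (w \in B); case: (w \in C); case: (w \in D) => //= *;
  by [apply: Or41 | apply: Or42 | apply: Or43 | apply: Or44].
have subb (X : {set V}) : (forall w, w \in X -> w \in bnd) -> X \subset bnd.
  by move=> h; apply/fintype.subsetP => w /h.
have [W1 [XW1 WX1 [v1 [fl1 fx1]]]] := strong src tgt c1 (subb (A :|: B)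
  ltac:(by move=> w; rewrite Hin !inE => /orP[]->; rewrite ?orbT)).
have [W2 [XW2 WX2 [v2 [fl2 fx2]]]] := strong src tgt c1 (subb (A :|: C)
  ltac:(by move=> w; rewrite Hin !inE => /orP[]->; rewrite ?orbT)).
have [W3 [XW3 WX3 [v3 [fl3 fx3]]]] := strong src tgt c1 (subb (B :|: C)
  ltac:(by move=> w; rewrite Hin !inE => /orP[]->; rewrite ?orbT)).
have mem (W X : {set V}) : X \subset W -> (forall w, w \in W -> w \in bnd -> w \in X) ->
    forall w, w \in bnd -> (w \in W) = (w \in X).
  move=> XW WX w wb; apply/idP/idP => [h|h]; first exact: WX.
  exact: (fintype.subsetP XW).
have m1 := mem _ _ XW1 WX1; have m2 := mem _ _ XW2 WX2; have m3 := mem _ _ XW3 WX3.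
have G1 := S_ge c1 (A :|: B) fl1; rewrite fx1 in G1.
have G2 := S_ge c1 (A :|: C) fl2; rewrite fx2 in G2.
have G3 := S_ge c1 (B :|: C) fl3; rewrite fx3 in G3.
have bin w : w \in A \/ w \in B \/ w \in C -> w \in bnd.
  by rewrite Hin => -[->|[->|->]]; rewrite ?orbT.
have cut_ok (W X : {set V}) :
  (forall w, w \in bnd -> (w \in W) = (w \in X)) -> (forall w, w \in X -> w \in bnd) ->
  X \subset W /\ (forall w, w \in W -> w \in bnd -> w \in X).
  move=> h hX; split; last by move=> w wW wb; rewrite -h.
  by apply/fintype.subsetP => w wX; rewrite h ?hX.
have [XA WXA] := cut_ok (W1 :&: W2 :\: W3) A
  ltac:(move=> w wb; rewrite !inE m1 ?m2 ?m3 // !inE;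
        by case: (cls w wb) => /and4P[/eqP-> /eqP-> /eqP-> _])
  ltac:(by move=> w h; apply: bin; left).
have [XB WXB] := cut_ok (W1 :&: W3 :\: W2) B
  ltac:(move=> w wb; rewrite !inE m1 ?m2 ?m3 // !inE;
        by case: (cls w wb) => /and4P[/eqP-> /eqP-> /eqP-> _])
  ltac:(by move=> w h; apply: bin; right; left).
have [XC WXC] := cut_ok (W2 :&: W3 :\: W1) C
  ltac:(move=> w wb; rewrite !inE m1 ?m2 ?m3 // !inE;
        by case: (cls w wb) => /and4P[/eqP-> /eqP-> /eqP-> _])
  ltac:(by move=> w h; apply: bin; right; right).
have [XU WXU] := cut_ok (W1 :|: W2 :|: W3) (A :|: B :|: C)
  ltac:(move=> w wb; rewrite !inE m1 ?m2 ?m3 // !inE;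
        by case: (cls w wb) => /and4P[/eqP-> /eqP-> /eqP-> _])
  ltac:(by move=> w; rewrite !inE => /orP[/orP[]|] h; apply: bin; auto).
have LA := S_le src tgt c1 XA WXA; have LB := S_le src tgt c1 XB WXB.
have LC := S_le src tgt c1 XC WXC; have LU := S_le src tgt c1 XU WXU.
have cs (P : pred E) : \sum_(e | P e) c e = (#|[set e | P e]|)%:R.
  by rewrite -sum1dep_card natr_sum; apply: eq_bigr => e _; rewrite c1.
have K := comb (bnd := bnd) (src := src) (tgt := tgt) (W1 := W1) (W2 := W2) (W3 := W3)
  ltac:(move=> w wb; rewrite m1 ?m2 ?m3 // !inE;
        by case: (cls w wb) => /and4P[/eqP-> /eqP-> /eqP-> _])
  ltac:(by move=> w wb; have := sb w wb; rewrite !cs ler_nat).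
move: K; rewrite -(ler_nat R) !natrD => K.
lra.
Qed.
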